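(* Let $R\in\mathbb R$ and let $f:[0,R)\to\mathbb R$ be continuously differentiable and satisfy (h1) $f(0)>0$, $f'(0)=-1$; (h2) $f'$ is strictly increasing and convex; (h3) $f(t)<0$ for some $t\in(0,R)$. Let $\beta:=\sup_{t\in[0,R)}-f(t)$ and $\bar t:=\sup\{t\in[0,R):f'(t)<0\}$. If $0\le\rho<\beta/2$, then $\rho<\bar t/2<\bar t$ and $f'(\rho)<0$. *)

(* Defs.v *)
From Stdlib Require Import Reals.
Open Scope R_scope.

Definition in_dom (Rr t : R) : Prop := 0 <= t < Rr.

(* [df t] is the derivative of [f] at [t] relative to the domain [0, Rr)
   (one-sided at the endpoint 0). *)
Definition has_deriv_on_dom (Rr : R) (f : R -> R) (t l : R) : Prop :=
  forall eps : R, 0 < eps -> exists delta : R, 0 < delta /\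
    forall h : R, h <> 0 -> in_dom Rr (t + h) -> Rabs h < delta ->
      Rabs ((f (t + h) - f t) / h - l) < eps.

Definition cont_on_dom (Rr : R) (g : R -> R) (t : R) : Prop :=
  forall eps : R, 0 < eps -> exists delta : R, 0 < delta /\
    forall s : R, in_dom Rr s -> Rabs (s - t) < delta -> Rabs (g s - g t) < eps.

Definition C1_on_dom (Rr : R) (f df : R -> R) : Prop :=
  (forall t, in_dom Rr t -> has_deriv_on_dom Rr f t (df t)) /\
  (forall t, in_dom Rr t -> cont_on_dom Rr df t).

Definition strictly_increasing_on_dom (Rr : R) (g : R -> R) : Prop :=
  forall x y, in_dom Rr x -> in_dom Rr y -> x < y -> g x < g y.

Definition convex_on_dom (Rr : R) (g : R -> R) : Prop :=
  forall x y l, in_dom Rr x -> in_dom Rr y -> 0 <= l <= 1 ->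
    g (l * x + (1 - l) * y) <= l * g x + (1 - l) * g y.

(* Main.v *)
Require Import Defs.
From Stdlib Require Import Reals Lra.
Open Scope R_scope.

Lemma deriv_interior (Rr : R) (f : R -> R) (t l : R) :
  0 < t -> t < Rr -> has_deriv_on_dom Rr f t l -> derivable_pt_lim f t l.
Proof.
  intros H0 H1 H eps Heps.
  destruct (H eps Heps) as [d [Hd Hh]].
  assert (Hp : 0 < Rmin d (Rmin t (Rr - t))).
  { repeat apply Rmin_pos; lra. }
  exists (mkposreal _ Hp). intros h Hn Hl. simpl in Hl.
  apply Hh; auto.
  - pose proof (Rmin_r d (Rmin t (Rr - t))).
    pose proof (Rmin_l t (Rr - t)). pose proof (Rmin_r t (Rr - t)).
    unfold in_dom. apply Rabs_def2 in Hl. lra.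
  - pose proof (Rmin_l d (Rmin t (Rr - t))). lra.
Qed.

Lemma mvt_ge (Rr : R) (f df : R -> R) (k a b : R) :
  (forall t, in_dom Rr t -> has_deriv_on_dom Rr f t (df t)) ->
  0 < a -> a < b -> b < Rr -> (forall c, a < c < b -> df c + k >= 0) ->
  f a + k * a <= f b + k * b.
Proof.
  intros Hd Ha Hab Hb Hc.
  assert (Hl : forall c, a <= c <= b -> derivable_pt_lim (fun x => f x + k * x) c (df c + k)).
  { intros c Hc'.
    replace (df c + k) with (df c + k * 1) by ring.
    apply derivable_pt_lim_plus.
    - apply (deriv_interior Rr); try lra. apply Hd. unfold in_dom; lra.
    - replace (k * 1) with (0 * id c + k * 1) by ring.
      apply (derivable_pt_lim_mult (fun _ => k) id).
      + apply derivable_pt_lim_const.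
      + apply derivable_pt_lim_id. }
  destruct (MVT_cor2 (fun x => f x + k * x) (fun c => df c + k) a b Hab Hl)
    as [c [Heq Hc2]].
  specialize (Hc c Hc2).
  assert (0 <= (df c + k) * (b - a)) by (apply Rmult_le_pos; lra).
  lra.
Qed.

Theorem proposition5p2 (Rr : R) (f df : R -> R) (beta tbar rho : R)
  (Hf : C1_on_dom Rr f df)
  (h1a : 0 < f 0) (h1b : df 0 = -1)
  (h2a : strictly_increasing_on_dom Rr df) (h2b : convex_on_dom Rr df)
  (h3 : exists t, 0 < t < Rr /\ f t < 0)
  (Hbeta : is_lub (fun y => exists t, in_dom Rr t /\ y = - f t) beta)
  (Htbar : is_lub (fun t => in_dom Rr t /\ df t < 0) tbar)
  (Hrho : 0 <= rho < beta / 2) :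
  rho < tbar / 2 /\ tbar / 2 < tbar /\ df rho < 0.
Proof.
  destruct Hf as [Hd _].
  destruct h3 as [t3 [Ht3 Hft3]].
  destruct Hbeta as [Hbub Hbl]. destruct Htbar as [Htub Htl].
  assert (tb0 : 0 <= tbar).
  { apply Htub. split; [unfold in_dom; lra | lra]. }
  assert (tbR : tbar <= Rr).
  { apply Htl. intros x [Hx _]. unfold in_dom in Hx. lra. }
  assert (beta0 : 0 < beta).
  { assert (- f t3 <= beta) by (apply Hbub; exists t3; split; [unfold in_dom|]; lra). lra. }
  assert (Hnear : exists d, 0 < d /\ forall h, 0 < h < d -> h < Rr -> f h + h > 0).
  { destruct (Hd 0 ltac:(unfold in_dom; lra) 1 ltac:(lra)) as [d [Hd0 Hh]].
    exists (Rmin d (f 0)). split. { apply Rmin_pos; lra. }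
    intros h Hh1 HhR.
    pose proof (Rmin_l d (f 0)). pose proof (Rmin_r d (f 0)).
    assert (Hh' := Hh h ltac:(lra) ltac:(unfold in_dom; lra)
                      ltac:(rewrite Rabs_right; lra)).
    rewrite h1b in Hh'. replace (0 + h) with h in Hh' by ring.
    apply Rabs_def2 in Hh'. destruct Hh' as [_ Hh'].
    assert (Hq : (f h - f 0) / h > -2) by lra.
    assert (f h - f 0 > -2 * h).
    { apply (Rmult_gt_compat_r h) in Hq; [|lra].
      unfold Rdiv in Hq. rewrite Rmult_assoc, Rinv_l in Hq by lra. lra. }
    lra. }
  assert (Hlt : forall t, in_dom Rr t -> 0 < t -> f t + t > 0).
  { intros t [Ht0 HtR] Htp. destruct Hnear as [d [Hd0 Hdn]].
    set (e := Rmin (d / 2) (t / 2)).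
    assert (He : 0 < e) by (apply Rmin_pos; lra).
    pose proof (Rmin_l (d/2) (t/2)). pose proof (Rmin_r (d/2) (t/2)).
    assert (f e + e > 0) by (apply Hdn; unfold e in *; lra).
    assert (f e + 1 * e <= f t + 1 * t).
    { apply (mvt_ge Rr f df); auto; try (unfold e in *; lra).
      intros c Hc.
      destruct (Req_dec c 0); [lra|].
      assert (df 0 < df c) by (apply h2a; unfold in_dom; lra). lra. }
    lra. }
  assert (Hbt : beta <= tbar).
  { apply Hbl. intros y [t [Ht Hy]]. subst y.
    destruct (Rle_dec t tbar) as [Hle|Hgt].
    - destruct (Req_dec t 0) as [->|Hn]; [lra|].
      assert (f t + t > 0) by (apply Hlt; auto; unfold in_dom in Ht; lra). lra.
    - apply Rnot_le_lt in Hgt. unfold in_dom in Ht.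
      destruct (Rle_dec (- f t) tbar) as [?|Hc]; [assumption|].
      apply Rnot_le_lt in Hc. exfalso.
      set (s := (tbar + Rmin (- f t) t) / 2).
      pose proof (Rmin_l (- f t) t). pose proof (Rmin_r (- f t) t).
      assert (Hmin : tbar < Rmin (- f t) t) by (apply Rmin_glb_lt; lra).
      assert (f s + s > 0) by (apply Hlt; unfold in_dom, s; lra).
      assert (f s + 0 * s <= f t + 0 * t).
      { apply (mvt_ge Rr f df); auto; try (unfold s; lra).
        intros c Hc'.
        destruct (Rlt_dec (df c) 0) as [Hn|Hn]; [|lra].
        assert (c <= tbar) by (apply Htub; split; [unfold in_dom, s in *; lra | auto]).
        unfold s in Hc'. lra. }
      unfold s in *. lra. }
  split; [lra|]. split; [lra|].
  destruct (Rlt_dec (df rho) 0) as [?|Hn]; [assumption|].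
  exfalso. apply Rnot_lt_le in Hn.
  assert (tbar <= rho).
  { apply Htl. intros x [Hx Hdx].
    destruct (Rle_dec x rho) as [?|Hg]; [assumption|]. apply Rnot_le_lt in Hg.
    assert (df rho < df x) by (apply h2a; unfold in_dom in *; lra). lra. }
  lra.
Qed.
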